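(* Let $(X,\to,d_A)$ be a metric transition system over a finite set $A$ of actions, and let $\alpha\colon\mathit{DPMet}(\mathcal P(X))\to\mathrm{Pre}(\mathcal P(X))$ be $\alpha(d)=\{(X_1,X_2)\mid d(X_1,X_2)=0\}$. Then $\mu\,\beta_t=\alpha(\overline{\mu\,\beta_T})$, where $\mu\,\beta_t$ is the least fixpoint of $\beta_t$ in $(\mathit{Eq}(\mathcal P(X)),\supseteq)$, $\mu\,\beta_T$ is the least fixpoint of $\beta_T$ in $(\mathit{DPMet}(\mathcal P(X)),\le)$, and $\overline{d}(Y_1,Y_2)=\max\{d(Y_1,Y_2),d(Y_2,Y_1)\}$ denotes symmetrization.
   Context: A metric transition system: $(X,\to,d_A)$, $\to\subseteq X\times A\times X$, $d_A$ a metric on $A$ with values in $[0,1]$. $r\oplus s=\min\{r+s,1\}$, $r\ominus s=\max\{0,r-s\}$. $\mathit{DPMet}(Y)$: directed pseudo-metrics on $Y$ ($d(y,y)=0$, $d(x,z)\le d(x,y)\oplus d(y,z)$, values in $[0,1]$), ordered pointwise; $\mathrm{Pre}(Y)$, $\mathit{Eq}(Y)$: preorders, equivalences on $Y$. Qualitative: $\Diamond_a(S)=\{x\mid\exists x'\in S\colon x\xrightarrow{a}x'\}$; $\alpha_t(\mathcal S)=\{(X_1,X_2)\mid\forall S\in\mathcal S\colon(X_1\cap S\neq\emptyset\iff X_2\cap S\neq\emptyset)\}$, $\gamma_t(R)=\{S\subseteq X\mid\forall(X_1,X_2)\in R\colon(X_1\cap S\neq\emptyset\iff X_2\cap S\neq\emptyset)\}$,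 $\mathit{lo}_t(\mathcal S)=\bigcup_{a}\{\Diamond_a(S)\mid S\in\mathcal S\}\cup\{X\}$, $\beta_t=\alpha_t\circ\mathit{lo}_t\circ\gamma_t$. Quantitative: $\bigcirc_af(x)=\bigvee\{(1-d_A(b,a))\land f(x')\mid x\xrightarrow{b}x'\}$, $\tilde f(Y)=\bigvee_{x\in Y}f(x)$, $\alpha_T(\mathcal F)(X_1,X_2)=\bigvee_{f\in\mathcal F}(\tilde f(X_1)\ominus\tilde f(X_2))$, $\gamma_T(d)=\{f\mid\forall X_1,X_2\colon\tilde f(X_1)\ominus\tilde f(X_2)\le d(X_1,X_2)\}$, $\mathit{lo}_T(\mathcal F)=\bigcup_a\{\bigcirc_af\mid f\in\mathrm{cl}^{\mathrm{sh}}(\mathcal F)\}\cup\{1\}$ with $\mathrm{cl}^{\mathrm{sh}}$ the closure under constant shifts $f\mapsto f\ominus c$, $f\mapsto f\oplus c$, and $\beta_T=\alpha_T\circ\mathit{lo}_T\circ\gamma_T$. *)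

(* Defs.v *)
(* reals are an arbitrary R : realType, sets are
   classical_sets' [set T], suprema are [sup] (with [sup set0 = 0]). *)
From HB Require Import structures.
From mathcomp Require Import all_boot all_order all_algebra.
From mathcomp Require Import classical_sets reals.
Set Implicit Arguments. Unset Strict Implicit. Unset Printing Implicit Defensive.
Import Order.TTheory GRing.Theory Num.Theory.
Local Open Scope classical_set_scope.
Local Open Scope ring_scope.

Section MTS.
Variables (R : realType) (A : finType) (X : Type).
Variables (trans : X -> A -> X -> Prop) (dA : A -> A -> R).

Definition tplus (r s : R) : R := Num.min (r + s) 1.
Definition tminus (r s : R) : R := Num.max 0 (r - s).

Definition is_metric01 (d : A -> A -> R) : Prop :=
  (forall a b, 0 <= d a b <= 1) /\ (forall a b, d a b = 0 <-> a = b) /\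
  (forall a b, d a b = d b a) /\ (forall a b c, d a c <= d a b + d b c).

Definition relP := set X -> set X -> Prop.

Definition is_equiv (E : relP) : Prop :=
  (forall Y, E Y Y) /\ (forall Y1 Y2, E Y1 Y2 -> E Y2 Y1) /\
  (forall Y1 Y2 Y3, E Y1 Y2 -> E Y2 Y3 -> E Y1 Y3).

Definition is_DPMet (d : set X -> set X -> R) : Prop :=
  (forall Y1 Y2, 0 <= d Y1 Y2 <= 1) /\ (forall Y, d Y Y = 0) /\
  (forall Y1 Y2 Y3, d Y1 Y3 <= tplus (d Y1 Y2) (d Y2 Y3)).

Definition meets (Y S : set X) : Prop := exists x, Y x /\ S x.

Definition Diamond (a : A) (S : set X) : set X :=
  [set x | exists x', trans x a x' /\ S x'].

Definition alpha_t (SS : set (set X)) : relP :=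
  fun X1 X2 => forall S, SS S -> (meets X1 S <-> meets X2 S).

Definition gamma_t (Rl : relP) : set (set X) :=
  [set S | forall X1 X2, Rl X1 X2 -> (meets X1 S <-> meets X2 S)].

Definition lo_t (SS : set (set X)) : set (set X) :=
  [set S' | (exists a S, SS S /\ S' = Diamond a S) \/ S' = setT].

Definition beta_t (Rl : relP) : relP := alpha_t (lo_t (gamma_t Rl)).

(* least fixpoint of beta_t in (Eq(P(X)), ⊇): a fixpoint equivalence
   containing every fixpoint equivalence *)
Definition is_lfp_beta_t (E : relP) : Prop :=
  is_equiv E /\ beta_t E = E /\
  (forall E', is_equiv E' -> beta_t E' = E' ->
     forall Y1 Y2, E' Y1 Y2 -> E Y1 Y2).

Definition is01 (f : X -> R) : Prop := forall x, 0 <= f x <= 1.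

Definition Circ (a : A) (f : X -> R) : X -> R :=
  fun x => sup [set r | exists b x', trans x b x' /\
                                     r = Num.min (1 - dA b a) (f x')].

Definition lift (f : X -> R) (Y : set X) : R :=
  sup [set r | exists x, Y x /\ r = f x].

Definition alpha_T (FF : set (X -> R)) : set X -> set X -> R :=
  fun X1 X2 => sup [set r | exists f, FF f /\
                                      r = tminus (lift f X1) (lift f X2)].

Definition gamma_T (d : set X -> set X -> R) : set (X -> R) :=
  [set f | is01 f /\
           forall X1 X2, tminus (lift f X1) (lift f X2) <= d X1 X2].

Inductive cl_sh (FF : set (X -> R)) : (X -> R) -> Prop :=
| cl_sh_in f : FF f -> cl_sh FF f
| cl_sh_minus f c : 0 <= c <= 1 -> cl_sh FF f ->
    cl_sh FF (fun x => tminus (f x) c)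
| cl_sh_plus f c : 0 <= c <= 1 -> cl_sh FF f ->
    cl_sh FF (fun x => tplus (f x) c).

Definition lo_T (FF : set (X -> R)) : set (X -> R) :=
  [set g | (exists a f, cl_sh FF f /\ g = Circ a f) \/ g = (fun _ => 1)].

Definition beta_T (d : set X -> set X -> R) : set X -> set X -> R :=
  alpha_T (lo_T (gamma_T d)).

Definition is_lfp_beta_T (d : set X -> set X -> R) : Prop :=
  is_DPMet d /\ beta_T d = d /\
  (forall d', is_DPMet d' -> beta_T d' = d' ->
     forall Y1 Y2, d Y1 Y2 <= d' Y1 Y2).

Definition symm (d : set X -> set X -> R) : set X -> set X -> R :=
  fun Y1 Y2 => Num.max (d Y1 Y2) (d Y2 Y1).

Definition alpha0 (d : set X -> set X -> R) : relP :=
  fun X1 X2 => d X1 X2 = 0.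

End MTS.

(* Main.v *)
Require Import Defs.
From HB Require Import structures.
From mathcomp Require Import all_boot all_order all_algebra.
From mathcomp Require Import boolp classical_sets reals.
From mathcomp Require Import lra.
Set Implicit Arguments. Unset Strict Implicit. Unset Printing Implicit Defensive.
Import Order.TTheory GRing.Theory Num.Theory.
Local Open Scope classical_set_scope.
Local Open Scope ring_scope.

Section Gen.
Variable R : realType.
Implicit Types S : set R.

Lemma supS_le S b : 0 <= b -> (forall r, S r -> r <= b) -> sup S <= b.
Proof.
move=> b0 H; have [[x Sx]|N] := pselect (S !=set0).
  by apply: ge_sup; [exists x | move=> y /H].
have -> : S = set0 by apply/seteqP; split=> x // Sx; exfalso; apply: N; exists x.
by rewrite sup0.
Qed.

Lemma supS_ub S b r : (forall r, S r -> r <= b) -> S r -> r <= sup S.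
Proof. by move=> H Sr; apply: ub_le_sup => //; exists b => y /H. Qed.

Lemma supS_gt S t : 0 <= t -> t < sup S -> exists r, S r /\ t < r.
Proof.
move=> t0 ht; have [[x Sx]|N] := pselect (S !=set0).
  by have [y Sy ty] := sup_gt (ex_intro _ x Sx) ht; exists y.
have E : S = set0 by apply/seteqP; split=> x // Sx; exfalso; apply: N; exists x.
by move: ht; rewrite E sup0 ltNge t0.
Qed.

Lemma supS_ge0 S : (forall r, S r -> 0 <= r <= 1) -> 0 <= sup S.
Proof.
move=> H; have [[x Sx]|N] := pselect (S !=set0).
  apply: le_trans (_ : x <= sup S); first by case/andP: (H x Sx).
  by apply: (@supS_ub _ 1) => // r /H /andP[].
have E : S = set0 by apply/seteqP; split=> x // Sx; exfalso; apply: N; exists x.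
by rewrite E sup0.
Qed.

Lemma supS_01 S : (forall r, S r -> 0 <= r <= 1) -> 0 <= sup S <= 1.
Proof.
move=> H; rewrite supS_ge0 //=; apply: supS_le => // r /H /andP[] //.
Qed.

Lemma tminus01 (a b : R) : 0 <= a <= 1 -> 0 <= b -> 0 <= tminus a b <= 1.
Proof.
move=> /andP[a0 a1] b0; rewrite /tminus le_max lexx /= ge_max ler01 /=.
lra.
Qed.

Lemma tminus_le0 (a b : R) : tminus a b <= 0 -> a <= b.
Proof. by rewrite /tminus ge_max lexx /= subr_le0. Qed.

Lemma tminus_ge (a b : R) : a - b <= tminus a b.
Proof. by rewrite /tminus le_max lexx orbT. Qed.

Lemma tminus_ge0 (a b : R) : 0 <= tminus a b.
Proof. by rewrite /tminus le_max lexx. Qed.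

Lemma tminus_le (a b c : R) : 0 <= c -> a - b <= c -> tminus a b <= c.
Proof. by move=> c0 h; rewrite /tminus ge_max c0. Qed.

Lemma tminus_lt (a c t : R) : 0 <= t -> t < tminus a c -> t + c < a.
Proof. rewrite /tminus lt_max => t0 /orP[|]; [rewrite ltNge t0 // | lra]. Qed.

Lemma tplus_lt (a c t : R) : t < tplus a c -> t < a + c /\ t < 1.
Proof. by rewrite /tplus lt_min => /andP[]. Qed.

Lemma tplus01 (a c : R) : 0 <= a -> 0 <= c -> 0 <= tplus a c <= 1.
Proof. move=> a0 c0; rewrite /tplus le_min ge_min lexx orbT andbT ler01 andbT. lra. Qed.

End Gen.

Section MTS.
Variables (R : realType) (A : finType) (X : Type).
Variables (trans : X -> A -> X -> Prop) (dA : A -> A -> R).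
Hypothesis HdA : is_metric01 dA.

Local Notation lft := (@Defs.lift R X).
Local Notation is01 := (@is01 R X).
Local Notation Circ := (Circ trans dA).
Local Notation lo_T := (lo_T trans dA).
Local Notation beta_T := (beta_T trans dA).
Local Notation beta_t := (beta_t trans).

Lemma lift_ub f Y x : is01 f -> Y x -> f x <= lft f Y.
Proof.
move=> Hf Yx; rewrite /Defs.lift; apply: (@supS_ub _ _ 1).
  by move=> r [y [_ ->]]; case/andP: (Hf y).
by exists x.
Qed.

Lemma lift01 f Y : is01 f -> 0 <= lft f Y <= 1.
Proof. by move=> Hf; apply: supS_01 => r [y [_ ->]]. Qed.

Lemma lift_le f Y b : 0 <= b -> (forall x, Y x -> f x <= b) -> lft f Y <= b.
Proof. by move=> b0 H; apply: supS_le => // r [y [Yy ->]]; apply: H. Qed.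

Lemma lift_gt f Y t : 0 <= t -> t < lft f Y -> exists x, Y x /\ t < f x.
Proof. by move=> t0 /(supS_gt t0) [r [[y [Yy ->]] h]]; exists y. Qed.

Lemma lift_mono f Y Y' : is01 f -> Y `<=` Y' -> lft f Y <= lft f Y'.
Proof.
move=> Hf sub; apply: lift_le; first by case/andP: (lift01 Y' Hf).
by move=> x /sub; apply: lift_ub.
Qed.

Lemma dA01 a b : 0 <= dA a b <= 1.
Proof. by case: HdA => H _; apply: H. Qed.

Lemma Circ01 a f : is01 f -> is01 (Circ a f).
Proof.
move=> Hf x; apply: supS_01 => r [b [x' [_ ->]]].
have := dA01 b a; case/andP: (Hf x') => h1 h2 /andP[h3 h4].
rewrite le_min ge_min h2 orbT andbT h1 andbT; lra.
Qed.

Lemma Circ_ub a f x b x' : is01 f -> trans x b x' ->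
  Num.min (1 - dA b a) (f x') <= Circ a f x.
Proof.
move=> Hf tr; apply: (@supS_ub _ _ 1); last by exists b, x'.
move=> r [b' [y [_ ->]]]; rewrite ge_min; case/andP: (Hf y) => _ ->; by rewrite orbT.
Qed.

Lemma Circ_gt a f x t : 0 <= t -> t < Circ a f x ->
  exists b x', trans x b x' /\ t < Num.min (1 - dA b a) (f x').
Proof. by move=> t0 /(supS_gt t0) [r [[b [x' [tr ->]]] h]]; exists b, x'. Qed.

Lemma cl01 FF f : (forall g, FF g -> is01 g) -> cl_sh FF f -> is01 f.
Proof.
move=> H; elim => {f} [f /H //|f c /andP[c0 c1] _ IH x|f c /andP[c0 c1] _ IH x].
  by apply: tminus01 => //; apply: IH.
by case/andP: (IH x) => h _; apply: tplus01.
Qed.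

Lemma gammaT01 d f : gamma_T d f -> is01 f.
Proof. by case. Qed.

Lemma loT01 d g : lo_T (gamma_T d) g -> is01 g.
Proof.
case=> [[a [f [Hf ->]]]|->]; last by move=> x; rewrite ler01 lexx.
by apply: Circ01; apply: cl01 Hf => h; apply: gammaT01.
Qed.

Section AlphaT.
Variable FF : set (X -> R).
Hypothesis HFF : forall f, FF f -> is01 f.

Lemma aT_elem Y1 Y2 r : [set r | exists f, FF f /\ r = tminus (lft f Y1) (lft f Y2)] r -> 0 <= r <= 1.
Proof.
move=> [f [Hf ->]]; apply: tminus01; first exact: lift01 (HFF Hf).
by case/andP: (lift01 Y2 (HFF Hf)).
Qed.

Lemma aT01 Y1 Y2 : 0 <= alpha_T FF Y1 Y2 <= 1.
Proof. by apply: supS_01; apply: aT_elem. Qed.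

Lemma aT_ub f Y1 Y2 : FF f -> tminus (lft f Y1) (lft f Y2) <= alpha_T FF Y1 Y2.
Proof.
move=> Hf; apply: (@supS_ub _ _ 1); last by exists f.
by move=> r /aT_elem /andP[].
Qed.

Lemma aT_self Y : alpha_T FF Y Y = 0.
Proof.
apply/eqP; rewrite eq_le; case/andP: (aT01 Y Y) => -> _; rewrite andbT.
apply: supS_le => // r [f [_ ->]]; rewrite /tminus subrr maxxx //.
Qed.

Lemma aT_tri Y1 Y2 Y3 : alpha_T FF Y1 Y3 <= tplus (alpha_T FF Y1 Y2) (alpha_T FF Y2 Y3).
Proof.
have [h1 _] := andP (aT01 Y1 Y2); have [h2 _] := andP (aT01 Y2 Y3).
apply: supS_le; first by case/andP: (tplus01 h1 h2).
move=> r [f [Hf ->]]; rewrite /tplus le_min; apply/andP; split; last first.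
  have := @aT_elem Y1 Y3 (tminus (lft f Y1) (lft f Y3)) (ex_intro _ f (conj Hf erefl)).
  by case/andP.
have := aT_ub Y1 Y2 Hf; have := aT_ub Y2 Y3 Hf.
have := tminus_ge (lft f Y1) (lft f Y2); have := tminus_ge (lft f Y2) (lft f Y3).
have := tminus_ge0 (lft f Y1) (lft f Y2); have := tminus_ge0 (lft f Y2) (lft f Y3).
move=> *; apply: tminus_le; lra.
Qed.

Lemma aT_DPMet : is_DPMet (alpha_T FF).
Proof. split; [exact: aT01|split; [exact: aT_self|exact: aT_tri]]. Qed.

Lemma aT_mono1 Y Y' W : Y `<=` Y' -> alpha_T FF Y W <= alpha_T FF Y' W.
Proof.
move=> sub; apply: supS_le; first by case/andP: (aT01 Y' W).
move=> r [f [Hf ->]]; apply: le_trans (aT_ub Y' W Hf).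
rewrite /tminus ge_max le_max lexx /= le_max; apply/orP; right.
by rewrite lerD2r; apply: lift_mono => //; apply: HFF.
Qed.

Lemma aT_pt Y W : alpha_T FF Y W = lft (fun x => alpha_T FF [set x] W) Y.
Proof.
have H01 : is01 (fun x => alpha_T FF [set x] W) by move=> x; apply: aT01.
apply/eqP; rewrite eq_le; apply/andP; split; last first.
  apply: lift_le; first by case/andP: (aT01 Y W).
  by move=> x Yx; apply: aT_mono1 => y ->.
have [m0 _] := andP (lift01 Y H01).
apply: supS_le => // r [g [Hg ->]]; rewrite leNgt; apply/negP => hlt.
have [g01 gW] := andP (lift01 W (HFF Hg)).
have := tminus_lt m0 hlt => /(lift_gt (addr_ge0 m0 g01)) [x [Yx hx]].
have h1 := lift_ub H01 Yx.
have h2 := aT_ub [set x] W Hg.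
have h3 : g x <= lft g [set x] by apply: lift_ub (HFF Hg) _.
have h4 := tminus_ge (lft g [set x]) (lft g W).
lra.
Qed.

End AlphaT.

Lemma betaT_DPMet d : is_DPMet (beta_T d).
Proof. by apply: aT_DPMet => h; apply: loT01. Qed.

Lemma betaT01 d Y1 Y2 : 0 <= beta_T d Y1 Y2 <= 1.
Proof. by case: (betaT_DPMet d) => H _; apply: H. Qed.

Lemma betaT_mono (d1 d2 : set X -> set X -> R) :
  (forall Y1 Y2, d1 Y1 Y2 <= d2 Y1 Y2) ->
  forall Y1 Y2, beta_T d1 Y1 Y2 <= beta_T d2 Y1 Y2.
Proof.
move=> H Y1 Y2.
have sub : gamma_T d1 `<=` gamma_T d2.
  by move=> f [f01 Hf]; split => // Z1 Z2; apply: le_trans (Hf Z1 Z2) (H Z1 Z2).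
have subc : forall f, cl_sh (gamma_T d1) f -> cl_sh (gamma_T d2) f.
  move=> f; elim => {f} [f /sub|f c hc _ IH|f c hc _ IH].
  - by apply: cl_sh_in.
  - by apply: cl_sh_minus.
  - by apply: cl_sh_plus.
apply: supS_le; first by case/andP: (betaT01 d2 Y1 Y2).
move=> r [g [Hg ->]]; apply: aT_ub; first by move=> h; apply: loT01.
case: Hg => [[a [f [Hf ->]]]|->]; last by right.
by left; exists a, f; split => //; apply: subc.
Qed.


(* Knaster-Tarski construction of a fixpoint below every pre-fixpoint *)
Definition Pre (d : set X -> set X -> R) : Prop :=
  (forall Y1 Y2, 0 <= d Y1 Y2 <= 1) /\ (forall Y1 Y2, beta_T d Y1 Y2 <= d Y1 Y2).

Definition d0 : set X -> set X -> R :=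
  fun Y1 Y2 => inf [set r | exists d, Pre d /\ r = d Y1 Y2].

Lemma Pre1 : Pre (fun _ _ => 1).
Proof.
split; first by move=> *; rewrite ler01 lexx.
by move=> Y1 Y2; case/andP: (betaT01 (fun _ _ => 1) Y1 Y2).
Qed.

Lemma d0_le d Y1 Y2 : Pre d -> d0 Y1 Y2 <= d Y1 Y2.
Proof.
move=> Pd; apply: ge_inf; last by exists d.
by exists 0 => r [d' [[H _] ->]]; case/andP: (H Y1 Y2).
Qed.

Lemma d0_ge x Y1 Y2 : (forall d, Pre d -> x <= d Y1 Y2) -> x <= d0 Y1 Y2.
Proof.
move=> H; apply: lb_le_inf; first by exists 1, (fun _ _ => 1); split => //; exact: Pre1.
by move=> r [d [Pd ->]]; apply: H.
Qed.

Lemma d0_01 Y1 Y2 : 0 <= d0 Y1 Y2 <= 1.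
Proof.
apply/andP; split; last by apply: (@d0_le (fun _ _ => 1)); exact: Pre1.
by apply: d0_ge => d [H _]; case/andP: (H Y1 Y2).
Qed.

Lemma Pre_d0 : Pre d0.
Proof.
split; first exact: d0_01.
move=> Y1 Y2; apply: d0_ge => d Pd.
apply: le_trans (proj2 Pd Y1 Y2); apply: betaT_mono => Z1 Z2; exact: d0_le.
Qed.

Lemma d0_fix : beta_T d0 = d0.
Proof.
have P2 : Pre (beta_T d0).
  split; first exact: betaT01.
  by apply: betaT_mono; apply: (proj2 Pre_d0).
apply: funext => Y1; apply: funext => Y2; apply/eqP; rewrite eq_le.
by rewrite (proj2 Pre_d0) /=; apply: d0_le.
Qed.

Lemma lfp_le_pre d d' : is_lfp_beta_T trans dA d -> Pre d' ->
  forall Y1 Y2, d Y1 Y2 <= d' Y1 Y2.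
Proof.
move=> [_ [_ Hmin]] Pd' Y1 Y2; apply: le_trans (d0_le Y1 Y2 Pd').
apply: Hmin; last exact: d0_fix.
rewrite -d0_fix; exact: betaT_DPMet.
Qed.

Section D2.
Variable E : relP X.
Hypothesis HEs : forall Y1 Y2, E Y1 Y2 -> E Y2 Y1.
Hypothesis HEp : forall Y1 Y2, E Y1 Y2 -> beta_t E Y1 Y2.

Lemma ne_tr Z1 Z2 : E Z1 Z2 -> (exists x, Z1 x) -> exists x, Z2 x.
Proof.
move=> /HEp H [x Zx]; have [] := H setT; first by right.
by move=> h _; have [|y [Zy _]] := h; [exists x | exists y].
Qed.

Definition Inv (f : X -> R) := forall t, 0 <= t -> forall Z1 Z2, E Z1 Z2 ->
  (exists x, Z1 x /\ t < f x) -> exists x, Z2 x /\ t < f x.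

Lemma Inv_lift f Z1 Z2 : is01 f -> Inv f -> E Z1 Z2 -> lft f Z1 <= lft f Z2.
Proof.
move=> Hf Hi HE; rewrite leNgt; apply/negP => hlt.
have [t0 _] := andP (lift01 Z2 Hf).
have [y [Zy hy]] := Hi _ t0 _ _ HE (lift_gt t0 hlt).
have := lift_ub Hf Zy; lra.
Qed.

Lemma Inv_of_lift f : is01 f ->
  (forall Z1 Z2, E Z1 Z2 -> lft f Z1 <= lft f Z2) -> Inv f.
Proof.
move=> Hf H t t0 Z1 Z2 HE [x [Zx hx]]; apply: lift_gt => //.
by apply: lt_le_trans (H _ _ HE); apply: lt_le_trans hx (lift_ub Hf Zx).
Qed.

Lemma Inv_minus f c : is01 f -> 0 <= c -> Inv f -> Inv (fun x => tminus (f x) c).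
Proof.
move=> Hf c0 Hi t t0 Z1 Z2 HE [x [Zx /(tminus_lt t0) hx]].
have t0' : 0 <= t + c by apply: addr_ge0.
have [y [Zy hy]] := Hi _ t0' _ _ HE (ex_intro _ x (conj Zx hx)).
exists y; split => //; apply: lt_le_trans (tminus_ge _ _); lra.
Qed.

Lemma Inv_plus f c : is01 f -> 0 <= c -> Inv f -> Inv (fun x => tplus (f x) c).
Proof.
move=> Hf c0 Hi t t0 Z1 Z2 HE [x [Zx /tplus_lt [hx ht1]]].
have [tc|tc] := leP 0 (t - c).
  have [|y [Zy hy]] := Hi _ tc _ _ HE; first by exists x; split => //; lra.
  by exists y; split => //; rewrite /tplus lt_min; apply/andP; split => //; lra.
have [y Zy] := ne_tr HE (ex_intro _ x Zx).
exists y; split => //; rewrite /tplus lt_min; apply/andP; split => //.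
by case/andP: (Hf y) => *; lra.
Qed.

Lemma Inv_Circ a f : is01 f -> Inv f -> Inv (Circ a f).
Proof.
move=> Hf Hi t t0 Z1 Z2 HE [x [Zx /(Circ_gt t0) [b [x' [tr hx]]]]].
move: hx; rewrite lt_min => /andP[hb hx'].
pose S := [set y | t < f y].
have gS : gamma_t E S.
  move=> W1 W2 HW; split => -[y [Wy Sy]].
    by have [z [Wz hz]] := Hi _ t0 _ _ HW (ex_intro _ y (conj Wy Sy)); exists z.
  by have [z [Wz hz]] := Hi _ t0 _ _ (HEs HW) (ex_intro _ y (conj Wy Sy)); exists z.
have [h _] := @HEp _ _ HE (Diamond trans b S) (or_introl (ex_intro _ b (ex_intro _ S (conj gS erefl)))).
have [|y [Zy [y' [tr' Sy']]]] := h; first by exists x; split => //; exists x'.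
exists y; split => //; apply: lt_le_trans (Circ_ub a Hf tr').
by rewrite lt_min hb.
Qed.

Lemma Inv_one : Inv (fun _ => 1).
Proof.
move=> t t0 Z1 Z2 HE [x [Zx hx]]; have [y Zy] := ne_tr HE (ex_intro _ x Zx).
by exists y.
Qed.

Definition dd (Y1 Y2 : set X) : R := if `[< E Y1 Y2 >] then 0 else 1.

Lemma Inv_cl f : cl_sh (gamma_T dd) f -> Inv f.
Proof.
elim => {f} [f [Hf Hd]|f c /andP[c0 c1] Hc IH|f c /andP[c0 c1] Hc IH].
- apply: Inv_of_lift => // Z1 Z2 HE; apply: tminus_le0.
  by have := Hd Z1 Z2; rewrite /dd asboolT.
- by apply: Inv_minus => //; apply: cl01 Hc => h; apply: gammaT01.
- by apply: Inv_plus => //; apply: cl01 Hc => h; apply: gammaT01.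
Qed.

Lemma Pre_dd : Pre dd.
Proof.
split; first by move=> Y1 Y2; rewrite /dd; case: asboolP => _; rewrite ?lexx ?ler01.
move=> Y1 Y2; rewrite /dd; case: asboolP => HE; last by case/andP: (betaT01 dd Y1 Y2).
apply: supS_le => // r [g [Hg ->]].
have Ig : Inv g.
  case: Hg => [[a [f [Hf ->]]]|->]; last exact: Inv_one.
  apply: Inv_Circ; last exact: Inv_cl.
  by apply: cl01 Hf => h; apply: gammaT01.
have := Inv_lift (loT01 Hg) Ig HE.
by rewrite /tminus ge_max lexx /= subr_le0.
Qed.

Lemma D2 d Y1 Y2 : is_lfp_beta_T trans dA d -> E Y1 Y2 -> d Y1 Y2 = 0.
Proof.
move=> Hd HE; have := lfp_le_pre Hd Pre_dd Y1 Y2; rewrite /dd asboolT //.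
case: Hd => [[H _] _]; case/andP: (H Y1 Y2) => h _ h'.
by apply/eqP; rewrite eq_le h h'.
Qed.

End D2.

Lemma delta_ex a : exists δ : R, (0 < δ <= 1) /\ forall b, dA b a < δ -> b = a.
Proof.
suff [δ [Hδ H]] : exists δ : R, (0 < δ <= 1) /\
    forall b, b \in enum A -> b != a -> δ <= dA b a.
  exists δ; split => // b hb; apply/eqP; apply/negPn/negP => nba.
  by have := H b (mem_enum A b) nba; rewrite leNgt hb.
elim: (enum A) => [|b s [δ [/andP [d0 d1] IH]]].
  by exists 1; split => //; rewrite ltr01 lexx.
have [eba|nba] := eqVneq b a.
  exists δ; split; first by rewrite d0 d1.
  move=> c; rewrite in_cons => /orP[/eqP ->|cs]; first by rewrite eba eqxx.
  by apply: IH.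
have dpos : 0 < dA b a.
  case: HdA => H01 [Hz _]; rewrite lt_neqAle; case/andP: (H01 b a) => -> _.
  by rewrite andbT; apply/eqP => h; move/negP: nba; apply; apply/eqP; apply/Hz.
exists (Num.min δ (dA b a)); split.
  by rewrite lt_min d0 dpos ge_min d1.
move=> c; rewrite in_cons => /orP[/eqP ->|cs] nca; first by rewrite ge_min lexx orbT.
by rewrite ge_min IH.
Qed.

Section D1.
Variable d : set X -> set X -> R.
Hypothesis Hd : is_lfp_beta_T trans dA d.

Let K := alpha0 (symm d).

Lemma d01 Y1 Y2 : 0 <= d Y1 Y2 <= 1.
Proof. by case: Hd => [[H _] _]. Qed.

Lemma dF Y1 Y2 : d Y1 Y2 = alpha_T (lo_T (gamma_T d)) Y1 Y2.
Proof. by case: Hd => _ [Hf _]; rewrite -[in LHS]Hf. Qed.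

Let HF : forall g, lo_T (gamma_T d) g -> is01 g.
Proof. by move=> g; apply: loT01. Qed.

Lemma d_mono1 Y Y' W : Y `<=` Y' -> d Y W <= d Y' W.
Proof. by move=> sub; rewrite !dF; apply: aT_mono1. Qed.

Lemma d_pt Y W : d Y W = lft (fun x => d [set x] W) Y.
Proof.
rewrite dF (aT_pt HF); congr (Defs.lift _ _); apply: funext => x; by rewrite dF.
Qed.

Lemma d_self Y : d Y Y = 0.
Proof. by case: Hd => [[_ [H _]] _]. Qed.

Lemma d_tri Y1 Y2 Y3 : d Y1 Y3 <= d Y1 Y2 + d Y2 Y3.
Proof.
case: Hd => [[_ [_ H]] _]; apply: le_trans (H Y1 Y2 Y3) _.
by rewrite /tplus ge_min lexx.
Qed.

Lemma d_ub g Y1 Y2 : lo_T (gamma_T d) g -> tminus (lft g Y1) (lft g Y2) <= d Y1 Y2.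
Proof. by move=> Hg; rewrite dF; apply: aT_ub. Qed.

Lemma D1_dir Y1 Y2 S' : d Y1 Y2 = 0 -> lo_t trans (gamma_t K) S' ->
  Defs.meets Y1 S' -> Defs.meets Y2 S'.
Proof.
move=> h0 HS.
have HL : forall g, lo_T (gamma_T d) g -> lft g Y1 <= lft g Y2.
  by move=> g Hg; apply: tminus_le0; rewrite -h0; apply: d_ub.
case: HS => [[a [S [gS ->]]]|->]; last first.
  move=> [x [Yx _]].
  have Hg : lo_T (gamma_T d) (fun _ => 1) by right.
  have h1 := lift_ub (HF Hg) Yx.
  have [|y [Yy _]] := @lift_gt (fun _ => 1) Y2 0 (lexx _).
    by apply: lt_le_trans (HL _ Hg); apply: lt_le_trans h1.
  by exists y.
pose W := ~` S.
pose fW := fun x => d [set x] W.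
have fW01 : is01 fW by move=> x; apply: d01.
have fWg : gamma_T d fW.
  split => // Z1 Z2; rewrite -!d_pt; apply: tminus_le; first by case/andP: (d01 Z1 Z2).
  by have := d_tri Z1 Z2 W; lra.
have fW_W : forall x, W x -> fW x = 0.
  move=> x Wx; apply/eqP; rewrite eq_le; case/andP: (fW01 x) => -> _; rewrite andbT.
  by rewrite -(d_self W); apply: d_mono1 => y ->.
have fW_S : forall x, S x -> 0 < fW x.
  move=> x Sx; rewrite lt_neqAle; case/andP: (fW01 x) => -> _; rewrite andbT.
  apply/eqP => /esym fx0.
  pose Z := [set y | y = x \/ W y].
  have dZW : d Z W = 0.
    apply/eqP; rewrite eq_le; case/andP: (d01 Z W) => -> _; rewrite andbT d_pt.
    apply: lift_le => // y [->|/fW_W e]; [move: fx0 | move: e]; by rewrite /fW => ->.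
  have dWZ : d W Z = 0.
    apply/eqP; rewrite eq_le; case/andP: (d01 W Z) => -> _; rewrite andbT.
    by rewrite -(d_self Z); apply: d_mono1 => y Wy; right.
  have KZW : K Z W by rewrite /K /alpha0 /symm dZW dWZ maxxx.
  have [h _] := gS Z W KZW.
  have [|y [Wy Sy]] := h; first by exists x; split => //; left.
  exact: Wy Sy.
have [δ [/andP[δ0 δ1] Hδ]] := delta_ex a.
pose c := 1 - δ.
have c0 : 0 <= c by rewrite /c; lra.
have c1 : c <= 1 by rewrite /c; lra.
pose h := fun x => tplus (fW x) c.
have hcl : cl_sh (gamma_T d) h by apply: cl_sh_plus; [rewrite c0 c1|apply: cl_sh_in].
have Hg : lo_T (gamma_T d) (Circ a h) by left; exists a, h.
have h01 : is01 h by apply: cl01 hcl => f; apply: gammaT01.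
move=> [x [Yx [x' [tr Sx']]]].
have hx' : c < h x'.
  rewrite /h /tplus lt_min; apply/andP; split; last by rewrite /c; lra.
  by have := fW_S _ Sx'; lra.
have daa : dA a a = 0 by case: HdA => _ [Hz _]; apply/Hz.
have cx : c < Circ a h x.
  apply: lt_le_trans (Circ_ub a h01 tr).
  by rewrite lt_min daa subr0 hx' andbT /c; lra.
have cY2 : c < lft (Circ a h) Y2.
  apply: lt_le_trans (HL _ Hg); apply: lt_le_trans cx _.
  by apply: lift_ub => //; apply: HF.
have [y [Yy /(Circ_gt c0) [b [y' [tr' hy]]]]] := lift_gt c0 cY2.
move: hy; rewrite lt_min => /andP[hb hy'].
have eb : b = a by apply: Hδ; move: hb; rewrite /c; lra.
move: tr'; rewrite eb => tr'.
exists y; split => //; exists y'; split => //.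
apply: contrapT => nS.
have := fW_W _ nS; move: hy'; rewrite /h /tplus lt_min => /andP[hy' _] e.
by move: hy'; rewrite e add0r ltxx.
Qed.

Lemma K_post Y1 Y2 : K Y1 Y2 -> beta_t K Y1 Y2.
Proof.
rewrite /K /alpha0 /symm => hm.
have [a0 _] := andP (d01 Y1 Y2); have [b0 _] := andP (d01 Y2 Y1).
have h12 : d Y1 Y2 = 0.
  by apply/eqP; rewrite eq_le a0 andbT -hm le_max lexx.
have h21 : d Y2 Y1 = 0.
  by apply/eqP; rewrite eq_le b0 andbT -hm le_max lexx orbT.
move=> S' HS; split; [exact: D1_dir | exact: D1_dir].
Qed.

Lemma K_equiv : is_equiv K.
Proof.
rewrite /K /alpha0 /symm; split; first by move=> Y; rewrite d_self maxxx.
split; first by move=> Y1 Y2; rewrite maxC.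
move=> Y1 Y2 Y3 h1 h2.
have e : forall Z1 Z2, Num.max (d Z1 Z2) (d Z2 Z1) = 0 -> d Z1 Z2 = 0 /\ d Z2 Z1 = 0.
  move=> Z1 Z2 hm; have [a0 _] := andP (d01 Z1 Z2); have [b0 _] := andP (d01 Z2 Z1).
  split; apply/eqP; rewrite eq_le ?a0 ?b0 andbT -hm le_max lexx ?orbT //.
have [e12 e21] := e _ _ h1; have [e23 e32] := e _ _ h2.
have t1 := d_tri Y1 Y2 Y3; have t2 := d_tri Y3 Y2 Y1.
have [a0 _] := andP (d01 Y1 Y3); have [b0 _] := andP (d01 Y3 Y1).
have -> : d Y1 Y3 = 0 by apply/eqP; rewrite eq_le a0 andbT; lra.
have -> : d Y3 Y1 = 0 by apply/eqP; rewrite eq_le b0 andbT; lra.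
by rewrite maxxx.
Qed.

End D1.

Lemma betat_mono (R1 R2 : relP X) : (forall Y1 Y2, R1 Y1 Y2 -> R2 Y1 Y2) ->
  forall Y1 Y2, beta_t R1 Y1 Y2 -> beta_t R2 Y1 Y2.
Proof.
move=> H Y1 Y2 hb S' HS; apply: hb.
case: HS => [[a [S [gS ->]]]|->]; last by right.
left; exists a, S; split => //.
by move=> Z1 Z2 /H; apply: gS.
Qed.

Lemma betat_sym (R1 : relP X) Y1 Y2 : beta_t R1 Y1 Y2 -> beta_t R1 Y2 Y1.
Proof. by move=> hb S' HS; apply: iff_sym; apply: hb. Qed.

End MTS.

Theorem mainTheorem17 (R : realType) (A : finType) (X : Type)
    (trans : X -> A -> X -> Prop) (dA : A -> A -> R) :
  is_metric01 dA ->
  forall (E : relP X) (d : set X -> set X -> R),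
    is_lfp_beta_t trans E ->
    is_lfp_beta_T trans dA d ->
    E = alpha0 (symm d).
Proof.
move=> HdA E d [HEeq [HEfix HEmax]] Hd.
pose K := alpha0 (symm d).
have Kpost := K_post HdA Hd.
have Ksub : forall Y1 Y2, E Y1 Y2 -> K Y1 Y2.
  move=> Y1 Y2 HE; rewrite /K /alpha0 /symm.
  have HEs : forall Z1 Z2, E Z1 Z2 -> E Z2 Z1 by case: HEeq => _ [].
  have HEp : forall Z1 Z2, E Z1 Z2 -> beta_t trans E Z1 Z2 by move=> Z1 Z2; rewrite HEfix.
  by rewrite (D2 HdA HEs HEp Hd HE) (D2 HdA HEs HEp Hd (HEs _ _ HE)) maxxx.
have Kfix : beta_t trans K = K.
  have HKs : forall Z1 Z2, beta_t trans K Z1 Z2 -> beta_t trans K Z2 Z1.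
    by move=> Z1 Z2; apply: betat_sym.
  have HKp : forall Z1 Z2, beta_t trans K Z1 Z2 -> beta_t trans (beta_t trans K) Z1 Z2.
    by apply: betat_mono.
  apply: funext => Y1; apply: funext => Y2; apply: propext; split; last exact: Kpost.
  move=> hb; rewrite /K /alpha0 /symm.
  by rewrite (D2 HdA HKs HKp Hd hb) (D2 HdA HKs HKp Hd (HKs _ _ hb)) maxxx.
have KE := HEmax K (K_equiv Hd) Kfix.
apply: funext => Y1; apply: funext => Y2; apply: propext; split; [exact: Ksub|exact: KE].
Qed.
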